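(* Assume $t\ge 2$, fix $(i,j)\in[d']\times[t]$ and $n\in[t]\setminus\{j\}$. The $\binom{d+2}{3}$ linear polynomials \[ L_{\mathcal K}=|\operatorname{Perm}(\mathcal K)|\,y^{[i]}_j(\mathcal K)-\sum_{\substack{\mathcal A\cup\{b\}=\mathcal K\\ |\mathcal A|=2}}|\operatorname{Perm}(\mathcal A)|\,y^{[i]}_{n,j}(\mathcal A,b),\qquad \mathcal K\in\operatorname{Mult}_3([d]), \] all belong to the vanishing ideal $J$ of the attention variety and are linearly independent.
   Context: Setup: $Q,K\in\mathbb R^{a\times d}$, $V=(v_{ik})\in\mathbb R^{d'\times d}$, $W=(Q,K,V)$, $A=K^\top Q$, $\varphi_W(X)=VX(X^\top AX)$ for $X=(x_{kn})\in\mathbb R^{d\times t}$. $\operatorname{Mult}_r([d])$ is the set of size-$r$ multisets on $[d]$; $\operatorname{Perm}(\mathcal M)$ the set of distinct orderings of a multiset. $c^{[i]}_j(\mathcal K)$ and $c^{[i]}_{n,j}(\mathcal A,b)$ are the coefficients of $\prod_{u\in\mathcal K}x_{uj}$ and $(\prod_{u\in\mathcal A}x_{un})x_{bj}$ in $\varphi_W(X)[i,j]$; the scaled coefficients are $y^{[i]}_j(\mathcal K)=c^{[i]}_j(\mathcal K)/|\operatorname{Perm}(\mathcal K)|$, $y^{[i]}_{n,j}(\mathcal A,b)=c^{[i]}_{n,j}(\mathcal A,b)/|\operatorname{Perm}(\mathcal A)|$. The map $\mu$ sends $W$ to the array of scaled coefficients, viewed as values of ambient coordinates with the same names; the attention variety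 is the Zariski closure of $\operatorname{im}\mu$ and $J$ its vanishing ideal. The sum in $L_{\mathcal K}$ runs over distinct decompositions of $\mathcal K$ into a size-2 multiset $\mathcal A$ and a singleton $\{b\}$. *)

(* Defs.v *)
From mathcomp Require Import all_boot all_algebra.
From mathcomp Require Import reals.
From mathcomp Require Import mpoly.

Set Implicit Arguments.
Unset Strict Implicit.
Unset Printing Implicit Defensive.

Import GRing.Theory.
Local Open Scope ring_scope.

(* Size-r multisets on [d] = 'I_d, given by their multiplicity functions. *)
Definition mult (r d : nat) :=
  {m : {ffun 'I_d -> 'I_r.+1} | (\sum_(u < d) (m u : nat))%N == r}.

Definition mcount (r d : nat) (K : mult r d) (u : 'I_d) : nat := val K u.

Definition nperm (r d : nat) (K : mult r d) : nat :=
  #|[set s : r.-tuple 'I_d | [forall u, count_mem u s == mcount K u]]|.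

(* Polynomial ring in the entries x_{kn} of X (k in [d], n in [t]). *)
Definition NX (d t : nat) : nat := #|{: 'I_d * 'I_t}|.
Definition xpoly (R : realType) (d t : nat) := {mpoly R[NX d t]}.

Definition Xmat (R : realType) (d t : nat) : 'M[xpoly R d t]_(d, t) :=
  \matrix_(k < d, m < t) 'X_(enum_rank (k, m)).

Definition phi (R : realType) (a d d' t : nat)
    (Q Kk : 'M[R]_(a, d)) (V : 'M[R]_(d', d)) : 'M[xpoly R d t]_(d', t) :=
  let X := Xmat R d t in
  let A := Kk^T *m Q in
  (map_mx (fun c => c%:MP) V) *m X *m (X^T *m map_mx (fun c => c%:MP) A *m X).

Definition mon (d t : nat) (e : 'I_d * 'I_t -> nat) : 'X_{1..NX d t} :=
  [multinom e (enum_val k) | k < NX d t].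

Definition monK (r d t : nat) (K : mult r d) (j : 'I_t) :=
  mon (fun p : 'I_d * 'I_t => if p.2 == j then mcount K p.1 else 0%N).

Definition monA (r d t : nat) (A : mult r d) (b : 'I_d) (n j : 'I_t) :=
  mon (fun p : 'I_d * 'I_t =>
    ((if p.2 == n then mcount A p.1 else 0%N) +
     (if (p.2 == j) && (p.1 == b) then 1 else 0))%N).

Definition cK (R : realType) (a d d' t : nat) (Q Kk : 'M[R]_(a, d))
    (V : 'M[R]_(d', d)) (i : 'I_d') (j : 'I_t) (K : mult 3 d) : R :=
  (phi t Q Kk V i j)@_(monK K j).

Definition cA (R : realType) (a d d' t : nat) (Q Kk : 'M[R]_(a, d))
    (V : 'M[R]_(d', d)) (i : 'I_d') (n j : 'I_t) (A : mult 2 d) (b : 'I_d) : R :=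
  (phi t Q Kk V i j)@_(monA A b n j).

(* ambient coordinates: y^{[i]}_j(K) and y^{[i]}_{n,j}(A,b) with n <> j;
   a tuple (i, n, j, A, b) *)
Definition coordA (d d' t : nat) :=
  {x : 'I_d' * 'I_t * 'I_t * mult 2 d * 'I_d | x.1.1.1.2 != x.1.1.2}.
Definition coord (d d' t : nat) :=
  (('I_d' * 'I_t * mult 3 d) + coordA d d' t)%type.

Definition mu (R : realType) (a d d' t : nat) (Q Kk : 'M[R]_(a, d))
    (V : 'M[R]_(d', d)) (c : coord d d' t) : R :=
  match c with
  | inl (i, j, K) => cK Q Kk V i j K / (nperm K)%:R
  | inr x => let: (i, n, j, A, b) := val x in
             cA Q Kk V i n j A b / (nperm A)%:R
  end.

Definition NY (d d' t : nat) : nat := #|{: coord d d' t}|.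
Definition ypoly (R : realType) (d d' t : nat) := {mpoly R[NY d d' t]}.
Definition yvar (R : realType) (d d' t : nat) (c : coord d d' t) : ypoly R d d' t :=
  'X_(enum_rank c).
Definition yeval (R : realType) (d d' t : nat) (p : ypoly R d d' t)
    (y : coord d d' t -> R) : R := p.@[fun k => y (enum_val k)].

Definition in_image (R : realType) (a d d' t : nat) (y : coord d d' t -> R) : Prop :=
  exists (Q Kk : 'M[R]_(a, d)) (V : 'M[R]_(d', d)), y = mu Q Kk V.

Definition attention_variety (R : realType) (a d d' t : nat)
    (y : coord d d' t -> R) : Prop :=
  forall p : ypoly R d d' t,
    (forall z, in_image a z -> yeval p z = 0) -> yeval p y = 0.

Definition inJ (R : realType) (a d d' t : nat) (p : ypoly R d d' t) : Prop :=
  forall y, attention_variety a y -> yeval p y = 0.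

Definition LK (R : realType) (d d' t : nat) (i : 'I_d') (n j : 'I_t)
    (hnj : n != j) (K : mult 3 d) : ypoly R d d' t :=
  (nperm K)%:R *: yvar R (inl (i, j, K))
  - \sum_(Ab : mult 2 d * 'I_d |
           [forall u, (mcount Ab.1 u + (u == Ab.2) == mcount K u)%N])
      (nperm Ab.1)%:R *:
        yvar R (inr (exist (fun x : 'I_d' * 'I_t * 'I_t * mult 2 d * 'I_d =>
                               x.1.1.1.2 != x.1.1.2)
                            (i, n, j, Ab.1, Ab.2) hnj)).

(* Main.v *)
Require Import Defs.
From mathcomp Require Import all_boot all_algebra.
From mathcomp Require Import reals.
From mathcomp Require Import mpoly.
From mathcomp Require Import ring.
Import GRing.Theory Num.Theory.
Local Open Scope ring_scope.

Lemma count_le_size {r d} (s : r.-tuple 'I_d) u : (count_mem u s < r.+1)%N.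
Proof. by rewrite ltnS -{2}(size_tuple s) count_size. Qed.

Lemma sum_count_mem {d} (s : seq 'I_d) : (\sum_(u < d) count_mem u s)%N = size s.
Proof.
elim: s => [|x s IH] /=; first by rewrite big1.
by rewrite big_split /= IH (bigD1 x) //= eqxx big1 ?addn0 // => u; rewrite eq_sym => /negbTE ->.
Qed.

Definition tm {r d} (s : r.-tuple 'I_d) : mult r d.
Proof.
exists [ffun u : 'I_d => Ordinal (count_le_size s u)].
apply/eqP; rewrite -[X in _ = X](size_tuple s) -sum_count_mem.
by apply: eq_bigr => u _; rewrite ffunE.
Defined.

Lemma tmE {r d} (s : r.-tuple 'I_d) u : mcount (tm s) u = count_mem u s.
Proof. by rewrite /mcount /= ffunE. Qed.

Lemma mult_eqP {r d} (K1 K2 : mult r d) : (forall u, mcount K1 u = mcount K2 u) -> K1 = K2.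
Proof.
move=> h; apply: val_inj; apply/ffunP => u; apply: val_inj; exact: h.
Qed.

Lemma tm_surj {r d} (K : mult r d) : exists s : r.-tuple 'I_d, tm s = K.
Proof.
pose s0 := flatten [seq nseq (mcount K u) u | u <- enum 'I_d].
have hs : size s0 == r.
  rewrite size_flatten /shape -map_comp sumnE big_map.
  apply/eqP; rewrite -[RHS](eqP (valP K)) enumT.
  by apply: eq_bigr => u _; rewrite /= size_nseq.
exists (Tuple hs); apply: mult_eqP => u; rewrite tmE /= count_flatten -map_comp.
rewrite sumnE big_map enumT (bigD1 u) //= count_nseq /= eqxx mul1n.
by rewrite big1 ?addn0 // => v /negbTE; rewrite count_nseq /= eq_sym => ->.
Qed.

Lemma nperm_gt0 {r d} (K : mult r d) : (0 < nperm K)%N.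
Proof.
have [s hs] := tm_surj K; apply/card_gt0P; exists s; rewrite inE.
by apply/forallP => u; rewrite -hs tmE.
Qed.

Lemma card_mult3 d : #|{: mult 3 d}| = 'C(d + 2, 3).
Proof.
case: d => [|d].
  apply: eq_card0 => K; have := valP K; by rewrite big_ord0.
pose S := [set t : 3.-tuple 'I_d.+1 | sorted leq (map val t)].
have -> : 'C(d.+1 + 2, 3) = #|S| by rewrite card_sorted_tuples addnC.
rewrite -(@card_in_imset _ _ (@tm 3 d.+1) S).
  apply: eq_card => K; rewrite !inE; symmetry; apply/imsetP.
  have [s hs] := tm_surj K.
  have hs2 : size (sort (relpre val leq) s) == 3 by rewrite size_sort size_tuple.
  exists (Tuple hs2).
    rewrite inE /= sorted_map; apply: sort_sorted => x y /=; exact: leq_total.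
  rewrite -hs; apply: mult_eqP => u; rewrite !tmE /=.
  by apply/esym/permP; rewrite perm_sort.
move=> s1 s2; rewrite !inE => h1 h2 he; apply: val_inj; apply: (inj_map val_inj).
apply: (sorted_eq leq_trans anti_leq) => //; apply: perm_map.
apply/allP => x _; apply/eqP; by rewrite -!tmE he.
Qed.

Lemma mcoeff_yvar (R : realType) (d d' t : nat) (c c' : Defs.coord d d' t) :
  (yvar R c)@_(U_(@enum_rank _ c') : 'X_{1.. NY d d' t}) = (c == c')%:R.
Proof. by rewrite /yvar mcoeffXU (inj_eq enum_rank_inj). Qed.

Lemma indep (R : realType) (d d' t : nat) (i : 'I_d') (j n : 'I_t) (hnj : n != j)
  (lam : mult 3 d -> R) :
        \sum_(K : mult 3 d) lam K *: LK R i hnj K = 0 ->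
        forall K, lam K = 0.
Proof.
move=> h K0.
have := congr1 (mcoeff (U_(@enum_rank (Defs.coord d d' t) (inl (i, j, K0))))) h.
set m0 := (U_(@enum_rank (Defs.coord d d' t) (inl (i, j, K0))))%MM.
have E : forall K, (LK R i hnj K)@_m0 = (nperm K)%:R * (K == K0)%:R.
  move=> K; rewrite /LK mcoeffB mcoeffZ mcoeff_yvar raddf_sum big1 ?subr0.
    by have -> : (inl (i,j,K) == inl (i,j,K0) :> Defs.coord d d' t) = (K == K0) by apply/eqP/eqP => [[]|->].
  by move=> Ab _; rewrite -[X in X = _]/(mcoeff m0 _) mcoeffZ mcoeff_yvar mulr0.
have := congr1 (mcoeff m0) h.
rewrite mcoeff0 raddf_sum (bigD1 K0) //= big1 ?addr0.
  rewrite mcoeffZ E eqxx mulr1.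
  move/eqP; rewrite mulf_eq0 pnatr_eq0 => /orP [/eqP //|].
  by rewrite eqn0Ngt nperm_gt0.
by move=> K hK; rewrite mcoeffZ E (negbTE hK) !mulr0.
Qed.

Lemma mul3E (S : comNzRingType) (d d' t : nat) (M : 'M[S]_(d', d)) (X : 'M[S]_(d, t))
  (A : 'M[S]_(d, d)) i j :
  (M *m X *m (X^T *m A *m X)) i j =
  \sum_(m < t) \sum_(k < d) \sum_(q < d) \sum_(p < d)
     M i k * X k m * X p m * A p q * X q j.
Proof.
rewrite mxE; apply: eq_bigr => m _.
rewrite mxE big_distrl; apply: eq_bigr => k _ /=.
rewrite mxE big_distrr; apply: eq_bigr => q _ /=.
rewrite mxE big_distrl big_distrr; apply: eq_bigr => p _ /=.
rewrite !mxE; ring.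
Qed.


Lemma phi_coeff (R : realType) (a d d' t : nat) (Q Kk : 'M[R]_(a, d))
    (V : 'M[R]_(d', d)) (i : 'I_d') (j : 'I_t) (M : 'X_{1.. NX d t}) :
  (phi t Q Kk V i j)@_M =
  \sum_(m < t) \sum_(k < d) \sum_(q < d) \sum_(p < d)
     V i k * (Kk^T *m Q) p q *
     ((U_(enum_rank (k, m)) + U_(enum_rank (p, m)) + U_(enum_rank (q, j)))%MM == M)%:R.
Proof.
rewrite /phi mul3E raddf_sum; apply: eq_bigr => m _.
rewrite raddf_sum; apply: eq_bigr => k _.
rewrite raddf_sum; apply: eq_bigr => q _.
rewrite raddf_sum; apply: eq_bigr => p _.
rewrite -mcoeffX -mcoeffCM !mpolyXD mpolyCM !mxE.
congr (mcoeff M _); ring.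
Qed.

Lemma monU3 (d t : nat) (x1 x2 x3 : 'I_d * 'I_t) (f : 'I_d * 'I_t -> nat) :
  ((U_(enum_rank x1) + U_(enum_rank x2) + U_(enum_rank x3))%MM == mon f) =
  [forall x, ((x1 == x) + (x2 == x) + (x3 == x) == f x)%N].
Proof.
apply/eqP/forallP => [/mnmP h x | h].
  have := h (enum_rank x); rewrite !mnmDE !mnm1E /mon mnmE enum_rankK.
  by rewrite !(inj_eq enum_rank_inj) => ->.
apply/mnmP => k; rewrite !mnmDE !mnm1E /mon mnmE.
have E y : (enum_rank y == k) = (y == enum_val k).
  by rewrite -{1}(enum_valK k) (inj_eq enum_rank_inj).
by rewrite !E; apply/eqP.
Qed.


Lemma condK d t (k p q : 'I_d) (m j : 'I_t) (f : 'I_d -> nat) :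
 [forall x : 'I_d * 'I_t, (((k,m) == x) + ((p,m) == x) + ((q,j) == x) ==
      (if x.2 == j then f x.1 else 0))%N]
 = (m == j) && [forall u, ((k == u) + (p == u) + (q == u) == f u)%N].
Proof.
apply/forallP/andP => [h|[/eqP -> /forallP h] [u v]].
  have hm : m == j.
    apply/negPn/negP => hmj; move: (h (k, m)); rewrite /= eqxx (negbTE hmj).
    by rewrite !addn_eq0.
  split => //; move/eqP: hm => hm; subst m; apply/forallP => u.
  by move: (h (u, j)); rewrite /= !xpair_eqE !eqxx !andbT.
rewrite /= !xpair_eqE; case: (eqVneq v j) => [hv|hv].
  by subst v; rewrite !andbT; apply: h.
by rewrite !andbF.
Qed.

Lemma condA d t (k p q b : 'I_d) (m n j : 'I_t) (f : 'I_d -> nat) (hnj : n != j) :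
 [forall x : 'I_d * 'I_t, (((k,m) == x) + ((p,m) == x) + ((q,j) == x) ==
      (if x.2 == n then f x.1 else 0) + (if (x.2 == j) && (x.1 == b) then 1 else 0))%N]
 = [&& m == n, q == b & [forall u, ((k == u) + (p == u) == f u)%N]].
Proof.
have hjn : (j == n) = false by rewrite eq_sym (negbTE hnj).
apply/forallP/and3P => [h|[/eqP hm /eqP hq /forallP h] [u v]].
  have hmn : m == n.
    apply/negPn/negP => hmn.
    case: (eqVneq m j) => hmj.
      subst m; move: (h (k,j)) (h (p,j)); rewrite /= !xpair_eqE !eqxx /= hjn !andbT.
      case: ifP => [/eqP hkb|_]; last by rewrite !addn_eq0. subst b.
      by rewrite (eq_sym k p); case: (p == k); case: (q == k); case: (q == p).
    move: (h (k, m)); rewrite /= eqxx (negbTE hmn) (negbTE hmj) /=.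
    by rewrite !addn_eq0.
  move/eqP: hmn => hmn; subst m; split => //.
    move: (h (q, j)); rewrite /= !xpair_eqE !eqxx hjn (negbTE hnj) ?andbF ?andbT /=.
    by case: ifP.
  apply/forallP => u; move: (h (u, n)); rewrite /= !xpair_eqE !eqxx hjn !andbT.
  by rewrite (negbTE hnj) andbF /= !addn0.
subst m q; rewrite /= !xpair_eqE.
rewrite (eq_sym n v) (eq_sym j v) (eq_sym b u).
case: ifP => [/eqP hv|hv].
  subst v; rewrite (negbTE hnj) !andbT !andbF /= !addn0; exact: h.
rewrite !andbF /=; case: (v == j); rewrite /= ?andbT ?andbF //.

Qed.

Lemma big_collapse {S : nzRingType} {t} (j : 'I_t) (F : 'I_t -> S) :
  (forall m, m != j -> F m = 0) -> \sum_(m < t) F m = F j.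
Proof.
move=> h; rewrite (bigD1 j) //= big1 ?addr0 //.
Qed.

Lemma cK_closed (R : realType) (a d d' t : nat) (Q Kk : 'M[R]_(a, d))
    (V : 'M[R]_(d', d)) (i : 'I_d') (j : 'I_t) (K : mult 3 d) :
  cK Q Kk V i j K = \sum_(k < d) \sum_(q < d) \sum_(p < d)
     V i k * (Kk^T *m Q) p q *
     [forall u, ((k == u) + (p == u) + (q == u) == mcount K u)%N]%:R.
Proof.
rewrite /cK phi_coeff (big_collapse j).
  apply: eq_bigr => k _; apply: eq_bigr => q _; apply: eq_bigr => p _.
  by rewrite /monK monU3 condK eqxx.
move=> m hm; apply: big1 => k _; apply: big1 => q _; apply: big1 => p _.
by rewrite /monK monU3 condK (negbTE hm) mulr0.
Qed.

Lemma cA_closed (R : realType) (a d d' t : nat) (Q Kk : 'M[R]_(a, d))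
    (V : 'M[R]_(d', d)) (i : 'I_d') (n j : 'I_t) (hnj : n != j)
    (A : mult 2 d) (b : 'I_d) :
  cA Q Kk V i n j A b = \sum_(k < d) \sum_(q < d) \sum_(p < d)
     V i k * (Kk^T *m Q) p q *
     ((q == b) && [forall u, ((k == u) + (p == u) == mcount A u)%N])%:R.
Proof.
rewrite /cA phi_coeff (big_collapse n).
  apply: eq_bigr => k _; apply: eq_bigr => q _; apply: eq_bigr => p _.
  by rewrite /monA monU3 (@condA _ _ _ _ _ _ _ _ _ _ hnj) eqxx.
move=> m hm; apply: big1 => k _; apply: big1 => q _; apply: big1 => p _.
by rewrite /monA monU3 (@condA _ _ _ _ _ _ _ _ _ _ hnj) (negbTE hm) mulr0.
Qed.

Lemma count1 (S : nzRingType) d (k p q : 'I_d) (K : mult 3 d) :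
 \sum_(Ab : mult 2 d * 'I_d | [forall u, (mcount Ab.1 u + (u == Ab.2) == mcount K u)%N])
   ((q == Ab.2) && [forall u, ((k == u) + (p == u) == mcount Ab.1 u)%N])%:R
 = [forall u, ((k == u) + (p == u) + (q == u) == mcount K u)%N]%:R :> S.
Proof.
pose ab0 : mult 2 d * 'I_d := (tm [tuple k; p], q).
have E (Ab : mult 2 d * 'I_d) :
    ((q == Ab.2) && [forall u, ((k == u) + (p == u) == mcount Ab.1 u)%N]) = (Ab == ab0).
  case: Ab => A b /=; apply/andP/eqP => [[/eqP <- /forallP h]|[-> ->]].
    congr pair; apply: mult_eqP => u; rewrite tmE /= addn0.
    by apply/esym/eqP; apply: h.
  by split => //; apply/forallP => u; rewrite tmE /= addn0.
have hP : [forall u, (mcount ab0.1 u + (u == ab0.2) == mcount K u)%N] =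
          [forall u, ((k == u) + (p == u) + (q == u) == mcount K u)%N].
  by apply: eq_forallb => u; rewrite tmE /= addn0 (eq_sym u q).
under eq_bigr => Ab _ do rewrite E.
rewrite -hP; case hok: [forall u, (mcount ab0.1 u + (u == ab0.2) == mcount K u)%N].
  rewrite (bigD1 ab0) //= eqxx big1 ?addr0 // => Ab /andP [_ /negbTE ->].
  by [].
rewrite big1 // => Ab hAb; case: eqP => // hE; rewrite hE hok in hAb.
by [].
Qed.

Lemma key (R : realType) (a d d' t : nat) (Q Kk : 'M[R]_(a, d))
    (V : 'M[R]_(d', d)) (i : 'I_d') (n j : 'I_t) (hnj : n != j) (K : mult 3 d) :
  cK Q Kk V i j K = \sum_(Ab : mult 2 d * 'I_d |
           [forall u, (mcount Ab.1 u + (u == Ab.2) == mcount K u)%N])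
      cA Q Kk V i n j Ab.1 Ab.2.
Proof.
rewrite cK_closed.
under [RHS]eq_bigr => Ab _ do rewrite (@cA_closed _ _ _ _ _ _ _ _ _ _ _ hnj).
rewrite [RHS]exchange_big; apply: eq_bigr => k _.
rewrite [RHS]exchange_big; apply: eq_bigr => q _.
rewrite [RHS]exchange_big; apply: eq_bigr => p _.
by rewrite -mulr_sumr count1.
Qed.

Lemma nperm_neq0 (R : realType) r d (K : mult r d) : (nperm K)%:R != 0 :> R.
Proof. by rewrite pnatr_eq0 -lt0n nperm_gt0. Qed.

Lemma inJ_LK (R : realType) (a d d' t : nat) (i : 'I_d') (j n : 'I_t) (hnj : n != j)
  (K : mult 3 d) : inJ a (LK R i hnj K).
Proof.
move=> y hy; apply: hy => z [Q [Kk [V ->]]].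
rewrite /yeval /LK mevalB mevalZ /yvar mevalXU enum_rankK (big_morph _ (mevalD _) (meval0 _)) /=.
under eq_bigr => Ab _ do rewrite mevalZ mevalXU enum_rankK /=.
rewrite mulrC divfK ?nperm_neq0 //.
under eq_bigr => Ab _ do rewrite mulrC divfK ?nperm_neq0 //.
by rewrite (@key _ _ _ _ _ _ _ _ _ _ _ hnj) subrr.
Qed.

Theorem mainTheorem5 (R : realType) (a d d' t : nat) (ht : (2 <= t)%N)
    (i : 'I_d') (j n : 'I_t) (hnj : n != j) :
  #|{: mult 3 d}| = 'C(d + 2, 3)
  /\ (forall K : mult 3 d, inJ a (LK R i hnj K))
  /\ (forall lam : mult 3 d -> R,
        \sum_(K : mult 3 d) lam K *: LK R i hnj K = 0 ->
        forall K, lam K = 0).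
Proof.
split; first exact: card_mult3.
split; first by move=> K; apply: inJ_LK.
exact: indep.
Qed.
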